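(* Consider the distributed associative memory setting described in the context, with agents running the DAM-TOGD update with learning rate $\eta_{n,t}=c/\sqrt{t-\tau_{n,\min}}$ for some constant $c>0$. Then $$\mathrm{Reg}(T)\le\sum_{n\in\mathcal{N}}\Big(2cQ_n\sqrt{T+\Delta\tau_n}+\frac{B^2}{2c}\sqrt{T}+P_n c + C_n\Big),$$ so that $\mathrm{Reg}(T)=\mathcal{O}\big(\sqrt{T+\Delta\tau_n}+\sqrt{T}\big)$, where $Q_n = \frac{K_n}{2}\sum_{m\in\mathcal{W}_n} L_m + |\mathcal{W}_n|\, K_n^2 \sum_{m\in\mathcal{W}_n}\tau_{n,m}$, $P_n = |\mathcal{W}_n|^2 K_n^2\,\tau_{n,\max}^2$, $C_n = \frac{\Delta\tau_n}{2}\big( K_n\sum_{m\in\mathcal{W}_n} L_m + |\mathcal{W}_n|\, B^2\big)$, with $K_n = \max_{m\in\mathcal{W}_n} w_{n,m}L_m$, $\tau_{n,\min}=\min_{m\in\mathcal{W}_n}\tau_{n,m}$, $\tau_{n,\max}=\max_{m\in\mathcal{W}_n}\tau_{n,m}$, $\Delta\tau_n=\tau_{n,\max}-\tau_{n,\min}$, and $|\mathcal{W}_n|$ the cardinality of $\mathcal{W}_n$.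
   Context: There are $N$ agents indexed by $\mathcal{N}=\{1,\dots,N\}$. At each time $t=1,2,\dots$, agent $m$ has a convex loss function $f_{m,t}:\mathcal{X}\to\mathbb{R}$, which only agent $m$ can evaluate. The feasible set $\mathcal{X}$ (a set of matrices) is closed, convex and bounded with diameter $B$, and $\|\nabla f_{m,t}(\mathbf{X})\|_F\le L_m$ for all $m$, $t$ and $\mathbf{X}\in\mathcal{X}$, with finite $L_m>0$. Norms are Frobenius norms and $\Pi_{\mathcal{X}}$ denotes Euclidean (Frobenius) projection onto $\mathcal{X}$. A row-stochastic matrix $\mathbf{W}$ with entries $w_{n,m}\in[0,1]$, $\sum_m w_{n,m}=1$, is given; $\mathcal{W}_n=\{m\in\mathcal{N}: w_{n,m}>0\}$. Agent $n$ maintains iterates $\mathbf{X}_{n,t}\in\mathcal{X}$ and its cumulative loss is $\mathcal{L}_n^T(\mathbf{X}_n^T)=\sum_{t=1}^T\sum_{m\in\mathcal{W}_n} w_{n,m} f_{m,t}(\mathbf{X}_{n,t})$. Let $\mathbf{U}_n^*\in\arg\min_{\mathbf{U}\in\mathcal{X}}\sum_{t=1}^T\sum_{m\in\mathcal{W}_n} w_{n,m}f_{m,t}(\mathbf{U})$, and define the regret $\mathrm{Reg}(T)=\sum_{n\in\mathcal{N}}\big(\mathcal{L}_n^T(\mathbf{X}_n^T)-\mathcal{L}_n^T(\mathbf{U}_n^* )\big)$ (with $\mathcal{L}_n^T(\mathbf{U}_n^* )$ meaning the constant sequence $\mathbf{U}_n^*$). Agents communicate over a connected undirected graph $\mathcal{G}=(\mathcal{N},\mathcal{E})$.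 For each $n$, a Steiner tree $\mathcal{T}_n$ in $\mathcal{G}$ rooted at $n$ and containing paths from $n$ to every agent of $\mathcal{W}_n$ is fixed; $\tilde\tau_{n,m}$ is the number of edges on the path in $\mathcal{T}_n$ from $n$ to $m$ (so $\tilde\tau_{n,n}=0$), and $\tau_{n,m}=2\tilde\tau_{n,m}$ is the round-trip delay: each message takes one time step per edge, so agent $n$ obtains $\nabla f_{m,s}(\mathbf{X}_{n,s})$ at time $s+\tau_{n,m}$. DAM-TOGD: starting from an initial point $\mathbf{X}_{n,1}\in\mathcal{X}$, each agent $n$ updates, for $t\ge1$, $$\mathbf{X}_{n,t+1}=\Pi_{\mathcal{X}}\Big[\mathbf{X}_{n,t}-\eta_{n,t}\sum_{m\in\mathcal{W}_n} w_{n,m}\nabla f_{m,t-\tau_{n,m}}(\mathbf{X}_{n,t-\tau_{n,m}})\,\mathbb{1}_{\{t>\tau_{n,m}\}}\Big],$$ where $\eta_{n,t}>0$ is the learning rate. *)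

(* Defs.v *)
From HB Require Import structures.
From mathcomp Require Import all_boot all_order all_algebra.
From mathcomp Require Import all_classical all_reals all_analysis.
Set Implicit Arguments. Unset Strict Implicit. Unset Printing Implicit Defensive.
Import Order.TTheory GRing.Theory Num.Theory.
Local Open Scope ring_scope.

Section DAM.
Variables (R : realType) (p q : nat).

Definition dam_frob_dot (A B : 'M[R]_(p, q)) : R := \sum_i \sum_j A i j * B i j.
Definition dam_frob (A : 'M[R]_(p, q)) : R := Num.sqrt (dam_frob_dot A A).

Definition dam_convex_set (S : set 'M[R]_(p, q)) :=
  forall X Y (l : R), S X -> S Y -> 0 <= l <= 1 -> S (l *: X + (1 - l) *: Y).

Definition dam_diam_le (S : set 'M[R]_(p, q)) (B : R) :=
  forall X Y, S X -> S Y -> dam_frob (X - Y) <= B.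

Definition dam_is_proj (S : set 'M[R]_(p, q)) (proj : 'M[R]_(p, q) -> 'M[R]_(p, q)) :=
  forall Y, S (proj Y) /\ forall Z, S Z -> dam_frob (Y - proj Y) <= dam_frob (Y - Z).
End DAM.

Section Consts.
Variables (R : realType) (N : nat) (w : 'M[R]_N) (L : 'I_N -> R) (tau : 'I_N -> 'I_N -> nat).

Definition dam_inW (n m : 'I_N) : bool := 0 < w n m.
Definition dam_cardW (n : 'I_N) : nat := #|[set m | dam_inW n m]|.
Definition dam_K (n : 'I_N) : R := \big[Num.max/0]_(m | dam_inW n m) (w n m * L m).
Definition dam_tau_max (n : 'I_N) : nat := \max_(m | dam_inW n m) tau n m.
Definition dam_tau_min (n : 'I_N) : nat := \big[minn/dam_tau_max n]_(m | dam_inW n m) tau n m.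
Definition dam_dtau (n : 'I_N) : nat := dam_tau_max n - dam_tau_min n.
Definition dam_sumL (n : 'I_N) : R := \sum_(m | dam_inW n m) L m.
Definition dam_Q (n : 'I_N) : R :=
  dam_K n / 2 * dam_sumL n + (dam_cardW n)%:R * dam_K n ^+ 2 * (\sum_(m | dam_inW n m) tau n m)%:R.
Definition dam_P (n : 'I_N) : R := (dam_cardW n)%:R ^+ 2 * dam_K n ^+ 2 * (dam_tau_max n)%:R ^+ 2.
Definition dam_C (B : R) (n : 'I_N) : R :=
  (dam_dtau n)%:R / 2 * (dam_K n * dam_sumL n + (dam_cardW n)%:R * B ^+ 2).
Definition dam_eta (c : R) (n : 'I_N) (t : nat) : R :=
  c / Num.sqrt (t%:R - (dam_tau_min n)%:R).
End Consts.

(* Main.v *)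
Require Import Defs.
From HB Require Import structures.
From mathcomp Require Import all_boot all_order all_algebra.
From mathcomp Require Import all_classical all_reals all_analysis.
Import Order.TTheory GRing.Theory Num.Theory.
Local Open Scope ring_scope.
From mathcomp Require Import ring lra zify.
Set Implicit Arguments. Unset Strict Implicit. Unset Printing Implicit Defensive.

Section Frob.
Variables (R : realType) (p q : nat).
Local Notation M := 'M[R]_(p, q).
Local Notation dot := (@dam_frob_dot R p q).
Local Notation frob := (@dam_frob R p q).

Lemma dotC (A B : M) : dot A B = dot B A.
Proof. rewrite /dam_frob_dot; apply: eq_bigr => i _; apply: eq_bigr => j _; exact: mulrC. Qed.

Lemma dotDl (A B C : M) : dot (A + B) C = dot A C + dot B C.
Proof.
rewrite /dam_frob_dot -big_split /=; apply: eq_bigr => i _.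
rewrite -big_split /=; apply: eq_bigr => j _; by rewrite !mxE mulrDl.
Qed.

Lemma dotZl k (A B : M) : dot (k *: A) B = k * dot A B.
Proof.
rewrite /dam_frob_dot mulr_sumr; apply: eq_bigr => i _.
rewrite mulr_sumr; apply: eq_bigr => j _; by rewrite !mxE mulrA.
Qed.

Lemma dot0l (B : M) : dot 0 B = 0.
Proof. by rewrite -(scale0r (0 : M)) dotZl mul0r. Qed.

Lemma dotNl (A B : M) : dot (- A) B = - dot A B.
Proof. by rewrite -scaleN1r dotZl mulN1r. Qed.

Lemma dotBl (A B C : M) : dot (A - B) C = dot A C - dot B C.
Proof. by rewrite dotDl dotNl. Qed.

Lemma dotDr (A B C : M) : dot C (A + B) = dot C A + dot C B.
Proof. by rewrite dotC dotDl !(dotC C). Qed.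
Lemma dotBr (A B C : M) : dot C (A - B) = dot C A - dot C B.
Proof. by rewrite dotC dotBl !(dotC C). Qed.
Lemma dotZr k (A B : M) : dot B (k *: A) = k * dot B A.
Proof. by rewrite dotC dotZl dotC. Qed.

Lemma dot_suml (I : Type) (r : seq I) (P : pred I) (F : I -> M) (C : M) :
  dot (\sum_(i <- r | P i) F i) C = \sum_(i <- r | P i) dot (F i) C.
Proof.
apply: (big_morph (fun A => dot A C)); [exact: (fun x y => dotDl x y C) | exact: dot0l].
Qed.

Lemma dot_ge0 (A : M) : 0 <= dot A A.
Proof. apply: sumr_ge0 => i _; apply: sumr_ge0 => j _; exact: sqr_ge0. Qed.

Lemma quad_CS (aa ab bb : R) : 0 <= bb ->
  (forall l : R, 0 <= aa - 2 * l * ab + l ^+ 2 * bb) -> ab ^+ 2 <= aa * bb.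
Proof.
move=> hb H.
have [bb0|bbpos] := eqVneq bb 0.
  rewrite bb0 mulr0.
  have [ab0|abn0] := eqVneq ab 0; first by rewrite ab0 expr0n.
  have := H ((aa + 1) / (2 * ab)); rewrite bb0 mulr0 addr0.
  have -> : 2 * ((aa + 1) / (2 * ab)) * ab = aa + 1 by field; rewrite abn0.
  lra.
have bp : 0 < bb by rewrite lt_def bbpos hb.
have := H (ab / bb).
have -> : aa - 2 * (ab / bb) * ab + (ab / bb) ^+ 2 * bb = aa - ab ^+ 2 / bb by field; rewrite bbpos.
rewrite subr_ge0 ler_pdivrMr //.
Qed.

Lemma dot_CS (A B : M) : dot A B ^+ 2 <= dot A A * dot B B.
Proof.
apply: quad_CS; first exact: dot_ge0.
move=> l; have := dot_ge0 (A - l *: B).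
by rewrite !dotBl !dotBr !dotZl !dotZr (dotC B A); lra.
Qed.

Lemma frob_ge0 (A : M) : 0 <= frob A.
Proof. exact: sqrtr_ge0. Qed.

Lemma frob_sqr (A : M) : frob A ^+ 2 = dot A A.
Proof. by rewrite /dam_frob sqr_sqrtr // dot_ge0. Qed.

Lemma dot_le_frob (A B : M) : dot A B <= frob A * frob B.
Proof.
have h1 : `|dot A B| <= frob A * frob B.
  rewrite -sqrtr_sqr /dam_frob -sqrtrM ?dot_ge0 //.
  by rewrite ler_wsqrtr // dot_CS.
exact: le_trans (ler_norm _) h1.
Qed.

Lemma frobD (A B : M) : frob (A + B) <= frob A + frob B.
Proof.
rewrite -(ler_pXn2r (n := 2)) ?nnegrE ?addr_ge0 ?frob_ge0 //.
rewrite frob_sqr dotDl !dotDr (dotC B A) sqrrD !frob_sqr.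
have := dot_le_frob A B; lra.
Qed.

Lemma frobZ k (A : M) : frob (k *: A) = `|k| * frob A.
Proof.
by rewrite /dam_frob dotZl dotZr mulrA -expr2 sqrtrM ?sqr_ge0 // sqrtr_sqr.
Qed.

Lemma frob0 : frob (0 : M) = 0.
Proof. by rewrite /dam_frob dot0l sqrtr0. Qed.

Lemma frobN (A : M) : frob (- A) = frob A.
Proof. by rewrite -scaleN1r frobZ normrN normr1 mul1r. Qed.

Lemma frob_sum (I : Type) (r : seq I) (P : pred I) (F : I -> M) :
  frob (\sum_(i <- r | P i) F i) <= \sum_(i <- r | P i) frob (F i).
Proof.
elim/big_rec2: _ => [|i y1 y2 _ IH]; first by rewrite frob0.
exact: le_trans (frobD _ _) (lerD (lexx _) IH).
Qed.

Lemma frob_dot_le (A : M) x : 0 <= x -> dot A A <= x ^+ 2 -> frob A <= x.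
Proof.
move=> hx h; rewrite -(ler_pXn2r (n := 2)) ?nnegrE ?frob_ge0 // frob_sqr //.
Qed.

Lemma dot_le_frob_le (A B : M) : dot A A <= dot B B -> frob A <= frob B.
Proof. by move=> h; rewrite /dam_frob ler_wsqrtr. Qed.

End Frob.

Section Proj.
Variables (R : realType) (p q : nat).
Local Notation M := 'M[R]_(p, q).
Local Notation dot := (@dam_frob_dot R p q).
Local Notation frob := (@dam_frob R p q).

Lemma dot_expand (A B : M) l :
  dot (A - l *: B) (A - l *: B) = dot A A - 2 * l * dot A B + l ^+ 2 * dot B B.
Proof. rewrite !dotBl !dotBr !dotZl !dotZr (dotC B A); ring. Qed.

Lemma dot_expandD (A B : M) :
  dot (A + B) (A + B) = dot A A + 2 * dot A B + dot B B.
Proof. rewrite !dotDl !dotDr (dotC B A); ring. Qed.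

Lemma proj_contract (S : set M) proj Y U :
  dam_convex_set S -> dam_is_proj S proj -> S U ->
  dot (proj Y - U) (proj Y - U) <= dot (Y - U) (Y - U).
Proof.
move=> cvx Hp SU.
have [SP Hmin] := Hp Y.
set P := proj Y in SP Hmin *.
have key : forall l : R, 0 < l <= 1 ->
    2 * dot (Y - P) (U - P) <= l * dot (U - P) (U - P).
  move=> l /andP [l0 l1].
  have SZ : S (l *: U + (1 - l) *: P) by apply: cvx => //; rewrite (ltW l0) l1.
  have := Hmin _ SZ.
  rewrite /dam_frob ler_sqrt ?dot_ge0 //.
  have -> : Y - (l *: U + (1 - l) *: P) = (Y - P) - l *: (U - P).
    by apply/matrixP => i j; rewrite !mxE; ring.
  rewrite dot_expand => h.
  have : 2 * l * dot (Y - P) (U - P) <= l * (l * dot (U - P) (U - P)) by lra.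
  rewrite -mulrA mulrCA ler_pM2l //.
have neg : dot (Y - P) (U - P) <= 0.
  rewrite leNgt; apply/negP => hx.
  set x := dot (Y - P) (U - P) in key hx.
  set D := dot (U - P) (U - P) in key.
  have D0 : 0 <= D by apply: dot_ge0.
  pose l := Num.min 1 (x / (D + 1)).
  have lpos : 0 < l by rewrite lt_min ltr01 divr_gt0 //; lra.
  have l1 : l <= 1 by rewrite ge_min lexx.
  have lx : l <= x / (D + 1) by rewrite ge_min lexx orbT.
  have := key l; rewrite lpos l1 => /(_ isT) h.
  have : l * D <= x / (D + 1) * D by rewrite ler_wpM2r.
  have : x / (D + 1) * D < x.
    rewrite mulrAC ltr_pdivrMr; last lra.
    by rewrite ltr_pM2l //; lra.
  lra.
have -> : Y - U = (Y - P) + (P - U) by rewrite addrA subrK.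
rewrite (dot_expandD (Y - P)).
have -> : dot (Y - P) (P - U) = - dot (Y - P) (U - P).
  by rewrite -(opprB U P) dotC dotNl dotC.
have := dot_ge0 (Y - P); lra.
Qed.

End Proj.

Section RealLemmas.
Variable R : realType.

Lemma inv_sqrt_step (y : R) : 1 <= y ->
  1 / Num.sqrt y <= 2 * (Num.sqrt y - Num.sqrt (y - 1)).
Proof.
move=> hy.
have s0 : 0 < Num.sqrt y by rewrite sqrtr_gt0; lra.
have e1 : Num.sqrt y ^+ 2 = y by rewrite sqr_sqrtr //; lra.
have e2 : Num.sqrt (y - 1) ^+ 2 = y - 1 by rewrite sqr_sqrtr //; lra.
have r0 : 0 <= Num.sqrt (y - 1) by apply: sqrtr_ge0.
rewrite ler_pdivrMr //.
have := sqr_ge0 (Num.sqrt y - Num.sqrt (y - 1)).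
nra.
Qed.

Lemma dam_sqrt_sum (c : R) (u a M : nat) : 0 <= c ->
  \sum_(0 <= i < M) c / Num.sqrt ((i.+1 + u)%:R - a%:R)
    <= 2 * c * Num.sqrt ((M + u)%:R - a%:R).
Proof.
move=> c0; elim: M => [|M IH].
  by rewrite big_geq // mulr_ge0 ?sqrtr_ge0 // mulr_ge0.
rewrite big_nat_recr //=.
have [le|lt] := leqP (M.+1 + u) a.
  have -> : Num.sqrt ((M.+1 + u)%:R - a%:R : R) = 0.
    by apply/eqP; rewrite sqrtr_eq0 subr_le0 ler_nat.
  have e2 : Num.sqrt ((M + u)%:R - a%:R : R) = 0.
    by apply/eqP; rewrite sqrtr_eq0 subr_le0 ler_nat; lia.
  by rewrite invr0 mulr0 addr0; rewrite e2 in IH.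
set y : R := (M.+1 + u)%:R - a%:R.
have y1 : 1 <= y.
  rewrite /y -(natrB R (ltnW lt)) (ler_nat R 1); lia.
have ey : ((M + u)%:R - a%:R : R) = y - 1 by rewrite /y addSn -addn1 natrD; lra.
rewrite ey in IH.
have := inv_sqrt_step y1.
have : c / Num.sqrt y = c * (1 / Num.sqrt y) by rewrite mul1r.
move=> -> h.
have : c * (1 / Num.sqrt y) <= c * (2 * (Num.sqrt y - Num.sqrt (y - 1))).
  by rewrite ler_wpM2l.
lra.
Qed.

Lemma dam_reindex (F : nat -> R) (tau a T : nat) : (a <= tau)%N ->
  \sum_(0 <= i < T) (if (tau < (i + a).+1)%N then F ((i + a).+1 - tau)%N else 0)
  = \sum_(0 <= i < T - (tau - a)) F i.+1.
Proof.
move=> hat; elim: T => [|T IH]; first by rewrite !big_geq.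
rewrite big_nat_recr //= IH.
have [le|lt] := leqP (tau - a) T.
  have -> : (T.+1 - (tau - a) = (T - (tau - a)).+1)%N by lia.
  rewrite big_nat_recr //=.
  have -> : (tau < (T + a).+1)%N by lia.
  congr (_ + F _); lia.
have -> : (T.+1 - (tau - a) = T - (tau - a))%N by lia.
have -> : (tau < (T + a).+1)%N = false by apply/negbTE; rewrite -leqNgt; lia.
by rewrite addr0.
Qed.

Lemma dam_telescope (D al : nat -> R) (B2 : R) (n : nat) :
  (forall i, 0 <= D i <= B2) -> (forall i, 0 <= al i) -> (forall i, al i <= al i.+1) ->
  \sum_(0 <= i < n.+1) (D i - D i.+1) * al i <= B2 * al n.
Proof.
move=> hD ha hm.
suff : \sum_(0 <= i < n.+1) (D i - D i.+1) * al i + D n.+1 * al n <= B2 * al n.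
  have := mulr_ge0 (proj1 (andP (hD n.+1))) (ha n); lra.
elim: n => [|n IH].
  rewrite big_nat1.
  have := hD 0%N; have := ha 0%N; nra.
rewrite big_nat_recr //=.
have := hD n.+1; have := hm n; have := ha n; nra.
Qed.

Lemma dam_jensen (I : finType) (P : pred I) (w L : I -> R) :
  (forall i, P i -> 0 <= w i) -> \sum_(i | P i) w i = 1 ->
  (\sum_(i | P i) w i * L i) ^+ 2 <= \sum_(i | P i) w i * L i ^+ 2.
Proof.
move=> w0 w1.
have E1 : \sum_(i | P i) \sum_(k | P k) w i * w k * L i ^+ 2 = \sum_(i | P i) w i * L i ^+ 2.
  apply: eq_bigr => i _.
  rewrite -[RHS]mulr1 -w1 mulr_sumr; apply: eq_bigr => k _; ring.
have E2 : \sum_(i | P i) \sum_(k | P k) w i * w k * L k ^+ 2 = \sum_(i | P i) w i * L i ^+ 2.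
  by rewrite exchange_big /= -E1; apply: eq_bigr => i _; apply: eq_bigr => k _; ring.
have E3 : (\sum_(i | P i) w i * L i) ^+ 2 =
    \sum_(i | P i) \sum_(k | P k) (w i * L i) * (w k * L k).
  by rewrite expr2 mulr_suml; apply: eq_bigr => i _; rewrite mulr_sumr.
rewrite E3.
have : 2 * \sum_(i | P i) \sum_(k | P k) (w i * L i) * (w k * L k) <=
       \sum_(i | P i) \sum_(k | P k) w i * w k * L i ^+ 2 +
       \sum_(i | P i) \sum_(k | P k) w i * w k * L k ^+ 2.
  rewrite -big_split mulr_sumr /=; apply: ler_sum => i Pi.
  rewrite -big_split mulr_sumr /=; apply: ler_sum => k Pk.
  have := w0 i Pi; have := w0 k Pk => a b.
  have := sqr_ge0 (L i - L k).
  have := mulr_ge0 a b.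
  nra.
rewrite E1 E2; lra.
Qed.

End RealLemmas.

Lemma frob_chain (R : realType) p q (X : nat -> 'M[R]_(p, q)) s tau :
  dam_frob (X s - X (s + tau)%N) <= \sum_(0 <= k < tau) dam_frob (X (s + k)%N - X (s + k).+1).
Proof.
elim: tau => [|tau IH]; first by rewrite big_geq // addn0 subrr frob0.
rewrite big_nat_recr //=.
have -> : X s - X (s + tau.+1)%N = (X s - X (s + tau)%N) + (X (s + tau)%N - X (s + tau).+1).
  by rewrite addnS addrA subrK.
exact: le_trans (frobD _ _) (lerD IH (lexx _)).
Qed.

Lemma bigminn_le_seq (I : eqType) (r : seq I) (P : pred I) (F : I -> nat) x0 i :
  i \in r -> P i -> (\big[minn/x0]_(j <- r | P j) F j <= F i)%N.
Proof.
elim: r => // j r IH; rewrite inE big_cons => /orP [/eqP <-|ir] Pi.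
  by rewrite Pi geq_minl.
case: (P j); last exact: IH.
by rewrite geq_min IH ?orbT.
Qed.

Lemma bigminn_le (I : finType) (P : pred I) (F : I -> nat) x0 i :
  P i -> (\big[minn/x0]_(j | P j) F j <= F i)%N.
Proof. by move=> Pi; apply: bigminn_le_seq => //; rewrite mem_index_enum. Qed.

Lemma eq_ler (R : realType) (x y : R) : x = y -> x <= y.
Proof. by move=> ->. Qed.

Section Agent.
Variables (R : realType) (p q N : nat) (S : set 'M[R]_(p,q)) (B : R)
  (f : 'I_N -> nat -> 'M[R]_(p, q) -> R)
  (g : 'I_N -> nat -> 'M[R]_(p, q) -> 'M[R]_(p, q))
  (L : 'I_N -> R) (w : 'M[R]_N) (tau : 'I_N -> 'I_N -> nat)
  (proj : 'M[R]_(p, q) -> 'M[R]_(p, q)) (c : R) (X : nat -> 'M[R]_(p,q))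
  (U : 'M[R]_(p,q)) (T : nat) (n : 'I_N).

Local Notation dot := (@dam_frob_dot R p q).
Local Notation frob := (@dam_frob R p q).
Local Notation P := (dam_inW w n).
Local Notation a := (dam_tau_min w tau n).
Local Notation K := (dam_K w L n).
Local Notation Wc := ((dam_cardW w n)%:R : R).
Local Notation sL := (dam_sumL w L n).
Local Notation eta := (dam_eta w tau c n).
Local Notation Dl := (dam_dtau w tau n).

Definition Gn t := \sum_(m | dam_inW w n m) w n m *:
  (if (tau n m < t)%N then g m (t - tau n m)%N (X (t - tau n m)%N) else 0).

Hypotheses (cvx : dam_convex_set S) (diam : dam_diam_le S B) (hproj : dam_is_proj S proj)
  (hconv : forall m t X Y, (1 <= t)%N -> S X -> S Y ->
      f m t X + dam_frob_dot (g m t X) (Y - X) <= f m t Y)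
  (L0 : forall m, 0 < L m)
  (hgL : forall m t X, (1 <= t)%N -> S X -> dam_frob (g m t X) <= L m)
  (w01 : forall n m, 0 <= w n m <= 1) (w1 : forall n, \sum_m w n m = 1) (c0 : 0 < c)
  (hX : forall t, (1 <= t)%N -> S (X t))
  (hupd : forall t, (1 <= t)%N -> X t.+1 = proj (X t - eta t *: Gn t))
  (SU : S U).

Lemma hPa m : P m -> (a <= tau n m)%N.
Proof. by move=> Pm; rewrite /dam_tau_min; apply: bigminn_le. Qed.

Lemma hPb m : P m -> (tau n m <= dam_tau_max w tau n)%N.
Proof. by move=> Pm; rewrite /dam_tau_max; apply: leq_bigmax_cond. Qed.

Lemma hK m : P m -> w n m * L m <= K.
Proof. by move=> Pm; rewrite /dam_K; apply: le_bigmax_cond. Qed.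

Lemma K0 : 0 <= K.
Proof. by rewrite /dam_K; apply: bigmax_ge_id. Qed.

Lemma w0 m : 0 <= w n m.
Proof. by have /andP[] := w01 n m. Qed.

Lemma wsum : \sum_(m | P m) w n m = 1.
Proof.
rewrite -(w1 n) [RHS](bigID P) /= [X in _ = _ + X]big1 ?addr0 // => m nPm.
apply/eqP; rewrite eq_le w0 andbT leNgt; exact: nPm.
Qed.

Lemma card_sum x : \sum_(m | P m) x = Wc * x.
Proof.
rewrite (eq_bigl (fun m => m \in [set m | P m])); last by move=> m; rewrite inE.
by rewrite sumr_const mulr_natl /dam_cardW.
Qed.

Lemma B0 : 0 <= B.
Proof. exact: le_trans (frob_ge0 _) (diam (hX (leqnn 1)) (hX (leqnn 1))). Qed.

Lemma frobXU t : (1 <= t)%N -> frob (X t - U) <= B.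
Proof. by move=> t1; apply: diam => //; apply: hX. Qed.

Lemma dotXU t : (1 <= t)%N -> 0 <= dot (X t - U) (X t - U) <= B ^+ 2.
Proof.
move=> t1; rewrite dot_ge0 /= -frob_sqr.
have := frobXU t1; have := frob_ge0 (X t - U); nra.
Qed.

Lemma Gnorm t : frob (Gn t) <= \sum_(m | P m) w n m * L m.
Proof.
apply: le_trans (frob_sum _ _ _) _; apply: ler_sum => m Pm.
rewrite frobZ ger0_norm ?w0 //; apply: ler_wpM2l; first exact: w0.
case: ifP => h; last by rewrite frob0 ltW.
by apply: hgL; [rewrite subn_gt0 | apply: hX; rewrite subn_gt0].
Qed.

Lemma SwL_le : \sum_(m | P m) w n m * L m <= Wc * K.
Proof. by rewrite -card_sum; apply: ler_sum => m Pm; apply: hK. Qed.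

Lemma SwL_ge0 : 0 <= \sum_(m | P m) w n m * L m.
Proof. by apply: sumr_ge0 => m _; rewrite mulr_ge0 ?w0 ?ltW. Qed.

Lemma Gdot t : dot (Gn t) (Gn t) <= K * sL.
Proof.
rewrite -frob_sqr.
have h1 : frob (Gn t) ^+ 2 <= (\sum_(m | P m) w n m * L m) ^+ 2.
  have := Gnorm t; have := frob_ge0 (Gn t); nra.
apply: le_trans h1 _.
apply: le_trans (dam_jensen (w := fun m => w n m) L (fun m _ => w0 m) wsum) _.
rewrite /dam_sumL mulr_sumr; apply: ler_sum => m Pm.
by rewrite expr2 mulrA; apply: ler_wpM2r; [exact: ltW | exact: hK].
Qed.

Lemma eta_ge0 t : 0 <= eta t.
Proof. by rewrite /dam_eta; apply: divr_ge0; [exact: ltW | exact: sqrtr_ge0]. Qed.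

Lemma step j : (1 <= j)%N -> frob (X j - X j.+1) <= eta j * (Wc * K).
Proof.
move=> j1.
have h := @proj_contract _ _ _ S proj (X j - eta j *: Gn j) (X j) cvx hproj (hX j1).
rewrite -(hupd j1) in h.
rewrite -opprB frobN.
apply: le_trans (dot_le_frob_le h) _.
rewrite addrAC subrr add0r frobN frobZ ger0_norm ?eta_ge0 //.
apply: ler_wpM2l; first exact: eta_ge0.
exact: le_trans (Gnorm j) SwL_le.
Qed.


Definition Dd i := dot (X (i + a).+1 - U) (X (i + a).+1 - U).
Definition al i : R := Num.sqrt (i.+1)%:R / (2 * c).

Lemma ogd i : dot (Gn (i + a).+1) (X (i + a).+1 - U)
  <= (Dd i - Dd i.+1) * al i + c / Num.sqrt (i.+1)%:R * (K * sL / 2).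
Proof.
set t := (i + a).+1.
have t1 : (1 <= t)%N by [].
have etaE : eta t = c / Num.sqrt (i.+1)%:R.
  rewrite /dam_eta -natrB; last by rewrite /t; lia.
  by congr (_ / Num.sqrt _%:R); rewrite /t; lia.
have h := @proj_contract _ _ _ S proj (X t - eta t *: Gn t) U cvx hproj SU.
rewrite -(hupd t1) in h.
have e1 : X t - eta t *: Gn t - U = (X t - U) - eta t *: Gn t by rewrite addrAC.
rewrite e1 in h.
rewrite dot_expand etaE in h.
rewrite /Dd addSn -/t /al.
set s := Num.sqrt (i.+1)%:R in h *.
have s0 : 0 < s by rewrite sqrtr_gt0 ltr0Sn.
have sn0 : s != 0 by rewrite gt_eqF.
have cn0 : c != 0 by rewrite gt_eqF.
set e := c / s in h *.
have e0 : 0 < e by rewrite divr_gt0.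
set x := dot (Gn t) (X t - U).
have hx : dot (X t - U) (Gn t) = x by rewrite dotC.
rewrite hx in h.
have hg : e ^+ 2 * dot (Gn t) (Gn t) <= e ^+ 2 * (K * sL).
  by apply: ler_wpM2l; [exact: sqr_ge0 | exact: Gdot].
have key : 2 * e * x <= (dot (X t - U) (X t - U) - dot (X t.+1 - U) (X t.+1 - U)) + e ^+ 2 * (K * sL).
  lra.
have -> : x = (2 * e * x) * (s / (2 * c)) by rewrite /e; field; rewrite sn0 cn0.
have -> : (dot (X t - U) (X t - U) - dot (X t.+1 - U) (X t.+1 - U)) * (s / (2 * c)) + e * (K * sL / 2)
   = ((dot (X t - U) (X t - U) - dot (X t.+1 - U) (X t.+1 - U)) + e ^+ 2 * (K * sL)) * (s / (2 * c)).
  by rewrite /e; field; rewrite sn0 cn0.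
apply: ler_wpM2r => //.
by apply: divr_ge0; [exact: ltW | rewrite mulr_ge0 // ltW].
Qed.

Lemma ogd_sum : \sum_(0 <= i < T) dot (Gn (i + a).+1) (X (i + a).+1 - U)
  <= B ^+ 2 / (2 * c) * Num.sqrt T%:R + c * K * sL * Num.sqrt T%:R.
Proof.
apply: le_trans (ler_sum _ (fun i _ => ogd i)) _.
rewrite big_split /=.
apply: lerD.
  case: T => [|T'].
    by rewrite big_geq // sqrtr0 mulr0.
  apply: le_trans (@dam_telescope _ (Dd) al (B ^+ 2) T' _ _ _) _.
  - by move=> i; apply: dotXU.
  - by move=> i; rewrite /al; apply: divr_ge0; [exact: sqrtr_ge0 | rewrite mulr_ge0 // ltW].
  - move=> i; rewrite /al; apply: ler_wpM2r.
      by rewrite invr_ge0 mulr_ge0 // ltW.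
    by apply: ler_wsqrtr; rewrite ler_nat.
  by rewrite /al; apply: eq_ler; field; rewrite gt_eqF.
rewrite -mulr_suml.
have := dam_sqrt_sum 0 0 T (ltW c0).
under eq_bigr do rewrite addn0 subr0.
rewrite addn0 subr0 => h.
have hk : 0 <= K * sL / 2.
  apply: divr_ge0 => //; apply: mulr_ge0; first exact: K0.
  by rewrite /dam_sumL; apply: sumr_ge0 => m _; apply: ltW.
apply: le_trans (ler_wpM2r hk h) _.
by apply: eq_ler; field.
Qed.

Lemma eta_sum k e : (e <= T)%N -> (k < e + a)%N ->
  \sum_(0 <= i < T - e) eta (i.+1 + k)%N <= 2 * c * Num.sqrt T%:R.
Proof.
move=> eT ke.
have [T0|Tpos] := eqVneq (T - e)%N 0%N.
  by rewrite T0 big_geq // !mulr_ge0 ?sqrtr_ge0 // ltW.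
rewrite /dam_eta. apply: le_trans (dam_sqrt_sum k a (T - e) (ltW c0)) _.
apply: ler_wpM2l; first by rewrite mulr_ge0 // ltW.
apply: ler_wsqrtr; rewrite lerBlDr -natrD ler_nat; lia.
Qed.

Lemma perm m : P m ->
  w n m * \sum_(0 <= i < T) dot (g m i.+1 (X i.+1)) (X i.+1 - U)
  <= w n m * \sum_(0 <= i < T - (tau n m - a)) dot (g m i.+1 (X i.+1)) (X (i.+1 + tau n m)%N - U)
     + 2 * c * Wc * K ^+ 2 * Num.sqrt T%:R * (tau n m)%:R + Dl%:R * (w n m * L m * B).
Proof.
move=> Pm.
have ha := hPa Pm; have hb := hPb Pm.
set tm := tau n m in ha hb *.
set e := (tm - a)%N.
have eD : (e <= Dl)%N by rewrite /e /dam_dtau; lia.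
have eT : (T - e <= T)%N by apply: leq_subr.
rewrite (big_cat_nat _ (n := (T - e)%N)) //=.
have split1 : \sum_(0 <= i < T - e) dot (g m i.+1 (X i.+1)) (X i.+1 - U)
  = \sum_(0 <= i < T - e) dot (g m i.+1 (X i.+1)) (X (i.+1 + tm)%N - U)
    + \sum_(0 <= i < T - e) dot (g m i.+1 (X i.+1)) (X i.+1 - X (i.+1 + tm)%N).
  rewrite -big_split /=; apply: eq_bigr => i _; rewrite -dotDr; congr (dot _ _).
  by apply/matrixP => r s; rewrite !mxE; ring.
rewrite split1.
have gap : \sum_(0 <= i < T - e) dot (g m i.+1 (X i.+1)) (X i.+1 - X (i.+1 + tm)%N)
    <= L m * (Wc * K) * (tm%:R * (2 * c * Num.sqrt T%:R)).
  apply: le_trans (_ : _ <= \sum_(0 <= i < T - e) (L m * (Wc * K)) *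
        \sum_(0 <= k < tm) eta (i.+1 + k)%N) _.
    apply: ler_sum => i _.
    apply: le_trans (dot_le_frob _ _) _.
    have g1 : frob (g m i.+1 (X i.+1)) <= L m by apply: hgL => //; apply: hX.
    have ch : frob (X i.+1 - X (i.+1 + tm)%N) <= (Wc * K) * \sum_(0 <= k < tm) eta (i.+1 + k)%N.
      apply: le_trans (frob_chain X i.+1 tm) _.
      rewrite mulr_sumr; apply: ler_sum => k _.
      by rewrite mulrC; apply: step.
    rewrite -mulrA; apply: ler_pM => //; try exact: frob_ge0.
  rewrite -mulr_sumr; apply: ler_wpM2l.
    by apply: mulr_ge0; [exact: ltW | apply: mulr_ge0; [exact: ler0n | exact: K0]].
  rewrite exchange_big /=.
  apply: le_trans (_ : _ <= \sum_(0 <= k < tm) (2 * c * Num.sqrt T%:R)) _.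
    apply: ler_sum_nat => k /andP [_ hk].
    have [eT'|eT'] := leqP e T; first by apply: eta_sum => //; rewrite /e; lia.
    have -> : (T - e = 0)%N by lia.
    by rewrite big_geq // !mulr_ge0 ?sqrtr_ge0 // ltW.
  by rewrite sumr_const_nat subn0 (mulr_natl _ tm).
have tail : \sum_(T - e <= i < T) dot (g m i.+1 (X i.+1)) (X i.+1 - U) <= Dl%:R * (L m * B).
  apply: le_trans (_ : _ <= \sum_(T - e <= i < T) (L m * B)) _.
    apply: ler_sum => i _.
    apply: le_trans (dot_le_frob _ _) _.
    apply: ler_pM; try exact: frob_ge0.
      by apply: hgL => //; apply: hX.
    exact: frobXU.
  rewrite sumr_const_nat -(mulr_natl _ (T - (T - e))); apply: ler_wpM2r.
    by apply: mulr_ge0; [exact: ltW | exact: B0].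
  rewrite ler_nat; lia.
have wK : w n m * L m <= K by apply: hK.
have wg := ler_wpM2l (w0 m) gap.
have wt := ler_wpM2l (w0 m) tail.
have e1 : w n m * (L m * (Wc * K) * (tm%:R * (2 * c * Num.sqrt T%:R)))
   = (w n m * L m) * ((Wc * K) * (tm%:R * (2 * c * Num.sqrt T%:R))) by ring.
have hpos : 0 <= (Wc * K) * (tm%:R * (2 * c * Num.sqrt T%:R)).
  by rewrite !mulr_ge0 ?K0 ?sqrtr_ge0 // ltW.
have := ler_wpM2r hpos wK.
have e2 : K * ((Wc * K) * (tm%:R * (2 * c * Num.sqrt T%:R)))
   = 2 * c * Wc * K ^+ 2 * Num.sqrt T%:R * tm%:R by ring.
have e3 : w n m * (Dl%:R * (L m * B)) = Dl%:R * (w n m * L m * B) by ring.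
rewrite e1 in wg; rewrite e2; rewrite e3 in wt.
rewrite !mulrDr.
lra.
Qed.

Lemma first_eq :
  \sum_(m | P m) w n m * \sum_(0 <= i < T - (tau n m - a)) dot (g m i.+1 (X i.+1)) (X (i.+1 + tau n m)%N - U)
  = \sum_(0 <= i < T) dot (Gn (i + a).+1) (X (i + a).+1 - U).
Proof.
transitivity (\sum_(m | P m) \sum_(0 <= i < T) w n m *
   (if (tau n m < (i + a).+1)%N then
      dot (g m ((i + a).+1 - tau n m)%N (X ((i + a).+1 - tau n m)%N))
          (X (((i + a).+1 - tau n m) + tau n m)%N - U) else 0)).
  apply: eq_bigr => m Pm; rewrite -mulr_sumr; congr (_ * _).
  rewrite (dam_reindex (fun s => dot (g m s (X s)) (X (s + tau n m)%N - U))) //.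
  exact: hPa.
rewrite exchange_big /=; apply: eq_bigr => i _.
rewrite /Gn dot_suml; apply: eq_bigr => m Pm.
rewrite dotZl; case: ifP => h; last by rewrite dot0l.
by rewrite subnK // ltnW.
Qed.

Lemma agent_bound :
  \sum_(1 <= t < T.+1) \sum_(m | P m) w n m * f m t (X t)
   - \sum_(1 <= t < T.+1) \sum_(m | P m) w n m * f m t U
  <= B ^+ 2 / (2 * c) * Num.sqrt T%:R + c * K * sL * Num.sqrt T%:R
     + 2 * c * Wc * K ^+ 2 * Num.sqrt T%:R * (\sum_(m | P m) tau n m)%:R
     + Dl%:R * \sum_(m | P m) w n m * L m * B.
Proof.
apply: le_trans (_ : _ <= \sum_(1 <= t < T.+1) \sum_(m | P m) w n m * dot (g m t (X t)) (X t - U)) _.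
  rewrite -sumrB; apply: ler_sum_nat => t /andP [t1 _].
  rewrite -sumrB; apply: ler_sum => m Pm; rewrite -mulrBr.
  apply: ler_wpM2l; first exact: w0.
  have := hconv m t1 (hX t1) SU.
  rewrite (dotBr U (X t)) (dotBr (X t) U); lra.
rewrite big_add1 /= exchange_big /=.
apply: le_trans (_ : _ <= \sum_(m | P m)
   (w n m * \sum_(0 <= i < T - (tau n m - a)) dot (g m i.+1 (X i.+1)) (X (i.+1 + tau n m)%N - U)
     + 2 * c * Wc * K ^+ 2 * Num.sqrt T%:R * (tau n m)%:R + Dl%:R * (w n m * L m * B))) _.
  apply: ler_sum => m Pm; rewrite -mulr_sumr; exact: perm.
rewrite !big_split /= first_eq -!mulr_sumr -natr_sum.
have := ogd_sum; lra.
Qed.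

Lemma sL0 : 0 <= sL.
Proof. by rewrite /dam_sumL; apply: sumr_ge0 => m _; apply: ltW. Qed.

Lemma agent_final :
  \sum_(1 <= t < T.+1) \sum_(m | P m) w n m * f m t (X t)
   - \sum_(1 <= t < T.+1) \sum_(m | P m) w n m * f m t U
  <= 2 * c * dam_Q w L tau n * Num.sqrt (T%:R + Dl%:R)
     + B ^+ 2 / (2 * c) * Num.sqrt T%:R
     + dam_P w L tau n * c + dam_C w L tau B n.
Proof.
apply: le_trans agent_bound _.
have k0 := K0; have s0 := sL0; have b0 := B0.
have Q0 : 0 <= dam_Q w L tau n.
  rewrite /dam_Q; apply: addr_ge0.
    by apply: mulr_ge0 => //; apply: divr_ge0.
  by apply: mulr_ge0; [apply: mulr_ge0; [exact: ler0n | exact: sqr_ge0] | exact: ler0n].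
have sq : Num.sqrt T%:R <= Num.sqrt (T%:R + Dl%:R) :> R.
  by apply: ler_wsqrtr; rewrite lerDl ler0n.
have eQ : c * K * sL * Num.sqrt T%:R
     + 2 * c * Wc * K ^+ 2 * Num.sqrt T%:R * (\sum_(m | P m) tau n m)%:R
   = 2 * c * dam_Q w L tau n * Num.sqrt T%:R by rewrite /dam_Q; field.
have h1 : 2 * c * dam_Q w L tau n * Num.sqrt T%:R <= 2 * c * dam_Q w L tau n * Num.sqrt (T%:R + Dl%:R).
  apply: ler_wpM2l => //; apply: mulr_ge0 => //; apply: mulr_ge0 => //; exact: ltW.
have P0 : 0 <= dam_P w L tau n * c.
  rewrite /dam_P; apply: mulr_ge0; last exact: ltW.
  by apply: mulr_ge0; [apply: mulr_ge0|]; exact: sqr_ge0.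
have hS : \sum_(m | P m) w n m * L m * B <= (K * sL + Wc * B ^+ 2) / 2.
  rewrite -card_sum /dam_sumL mulr_sumr -big_split /= mulr_suml.
  apply: ler_sum => m Pm.
  have wm := w01 n m; have Lm := L0 m; have km := hK Pm.
  have h2 : (w n m * L m) * (w n m * L m) <= K * L m.
    apply: le_trans (_ : _ <= (w n m * L m) * L m) _.
      apply: ler_wpM2l; first by apply: mulr_ge0; [exact: w0 | exact: ltW].
      rewrite -[X in _ <= X]mul1r; apply: ler_wpM2r; [exact: ltW | by case/andP: wm].
    by apply: ler_wpM2r => //; exact: ltW.
  have := sqr_ge0 (w n m * L m - B).
  rewrite expr2 in h2 *.
  nra.
have hC : Dl%:R * \sum_(m | P m) w n m * L m * B <= dam_C w L tau B n.
  rewrite /dam_C.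
  have -> : Dl%:R / 2 * (K * sL + Wc * B ^+ 2) = Dl%:R * ((K * sL + Wc * B ^+ 2) / 2) by ring.
  by apply: ler_wpM2l => //; exact: ler0n.
lra.
Qed.

End Agent.

Unset Implicit Arguments.
Theorem corollary1 (R : realType) (p q N : nat)
  (S : set 'M[R]_(p, q)) (B : R)
  (f : 'I_N -> nat -> 'M[R]_(p, q) -> R)
  (g : 'I_N -> nat -> 'M[R]_(p, q) -> 'M[R]_(p, q))
  (L : 'I_N -> R) (w : 'M[R]_N)
  (tt : 'I_N -> 'I_N -> nat) (tau : 'I_N -> 'I_N -> nat)
  (proj : 'M[R]_(p, q) -> 'M[R]_(p, q))
  (c : R) (Xs : 'I_N -> nat -> 'M[R]_(p, q))
  (U : 'I_N -> 'M[R]_(p, q)) (T : nat) :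
  (* feasible set: closed, convex, nonempty, diameter B *)
  closed (S : set 'M[R^o]_(p, q)) -> dam_convex_set S -> dam_diam_le S B ->
  (* Euclidean projection onto S *)
  dam_is_proj S proj ->
  (* g m t is the gradient of the convex loss f m t on S (first-order convexity) *)
  (forall m t X Y, (1 <= t)%N -> S X -> S Y ->
      f m t X + dam_frob_dot (g m t X) (Y - X) <= f m t Y) ->
  (* bounded gradients *)
  (forall m, 0 < L m) ->
  (forall m t X, (1 <= t)%N -> S X -> dam_frob (g m t X) <= L m) ->
  (* row-stochastic weight matrix *)
  (forall n m, 0 <= w n m <= 1) ->
  (forall n, \sum_m w n m = 1) ->
  (* round-trip delays along the Steiner trees *)
  (forall n, tt n n = 0%N) ->
  (forall n m, tau n m = (2 * tt n m)%N) ->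
  (* DAM-TOGD with eta_{n,t} = c / sqrt (t - tau_{n,min}) *)
  0 < c ->
  (forall n, S (Xs n 1%N)) ->
  (forall n t, (1 <= t)%N ->
     Xs n t.+1 = proj (Xs n t - dam_eta w tau c n t *:
        \sum_(m | dam_inW w n m) w n m *:
          (if (tau n m < t)%N then g m (t - tau n m)%N (Xs n (t - tau n m)%N) else 0))) ->
  (* U n is a minimizer of the cumulative loss of agent n over S *)
  (forall n, S (U n) /\ forall V, S V ->
     \sum_(1 <= t < T.+1) \sum_(m | dam_inW w n m) w n m * f m t (U n)
       <= \sum_(1 <= t < T.+1) \sum_(m | dam_inW w n m) w n m * f m t V) ->
  \sum_n (\sum_(1 <= t < T.+1) \sum_(m | dam_inW w n m) w n m * f m t (Xs n t)
          - \sum_(1 <= t < T.+1) \sum_(m | dam_inW w n m) w n m * f m t (U n))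
  <= \sum_n (2 * c * dam_Q w L tau n * Num.sqrt (T%:R + (dam_dtau w tau n)%:R)
             + B ^+ 2 / (2 * c) * Num.sqrt T%:R
             + dam_P w L tau n * c + dam_C w L tau B n).
Proof.
move=> _ cvx diam hproj hconv L0 hgL w01 w1 _ _ c0 hX1 hupd hU.
apply: ler_sum => n _.
have hXn : forall t, (1 <= t)%N -> S (Xs n t).
  case=> [//|t] _.
  case: t => [|t]; first exact: hX1.
  rewrite hupd //; exact: (proj1 (hproj _)).
exact: (@agent_final _ _ _ _ S B f g L w tau proj c (Xs n) (U n) T n cvx diam hproj hconv L0 hgL w01 w1 c0 hXn (hupd n) (proj1 (hU n))).
Qed.
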